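(* Let $I\subset\mathbb R$ be an open interval, $f:I\to\mathbb R$ continuously differentiable, and $p^*\in I$ with $f(p^* )=0$ and $f'(p^* )\ne0$. Let $\eta\in(0,1)$ and $\zeta\in(\eta,1)$. Then there exists $\epsilon>0$ with the following property. Let $(p_n)_{n\ge0}$, $(F_n)_{n\ge0}$, $(F'_n)_{n\ge0}$ be real sequences with $F'_n\ne0$, $p_{n+1}=p_n-F_n/F'_n$ for all $n$, $|p_0-p^*|\le\epsilon$, and such that for every $n$ with $p_n\in I$, $$2|F_n-f(p_n)|+|\Delta p_n|\,|F'_n-f'(p_n)|\le\eta|F_n|,\qquad \Delta p_n:=p_{n+1}-p_n.$$ Then $|p_n-p^*|\le\epsilon$ and $|p_{n+1}-p^*|\le\zeta|p_n-p^*|$ for all $n\ge0$; in particular $p_n\to p^*$. *)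

(* Defs.v *)
From Stdlib Require Import Reals.
Open Scope R_scope.

(* An open interval of R, with possibly infinite endpoints:
   None as lower endpoint means -oo, None as upper endpoint means +oo. *)
Definition in_open_interval (lo hi : option R) (x : R) : Prop :=
  match lo with Some a => a < x | None => True end /\
  match hi with Some b => x < b | None => True end.

(* Main.v *)
Require Import Defs.
From Stdlib Require Import Reals Lra Psatz.
Open Scope R_scope.
Lemma core (M k eta zeta a fx fpx fpxi e d F F' : R) :
  0 < M -> Rabs a = M -> 0 <= k -> 0 < eta < 1 ->
  2 * k + eta * (1 + k) <= zeta * (1 - k) -> k < 1 ->
  F + F' * d = 0 -> fx = fpxi * e ->
  Rabs (fpx - a) <= k * M -> Rabs (fpxi - a) <= k * M ->
  2 * Rabs (F - fx) + Rabs d * Rabs (F' - fpx) <= eta * Rabs F ->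
  Rabs (e + d) <= zeta * Rabs e.
Proof.
  intros HM Ha Hk He Hz Hk1 HF Hfx H1 H2 Hh.
  assert (Eq : fpx * (e + d) = (fpx - fpxi) * e + (fx - F) - (F' - fpx) * d).
  { subst fx. replace F with (- (F' * d)) by lra. ring. }
  assert (T : Rabs fpx * Rabs (e + d) <=
     Rabs (fpx - fpxi) * Rabs e + Rabs (F - fx) + Rabs d * Rabs (F' - fpx)).
  { rewrite <- Rabs_mult, Eq.
    eapply Rle_trans. apply Rabs_triang.
    rewrite Rabs_Ropp, !Rabs_mult.
    assert (Rabs ((fpx - fpxi) * e + (fx - F)) <= Rabs (fpx - fpxi) * Rabs e + Rabs (F - fx)).
    { eapply Rle_trans. apply Rabs_triang. rewrite Rabs_mult, (Rabs_minus_sym fx F). lra. }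
    lra. }
  assert (H3 : Rabs F <= Rabs fx + Rabs (F - fx)).
  { replace F with (fx + (F - fx)) at 1 by ring. apply Rabs_triang. }
  assert (H4 : Rabs fx = Rabs fpxi * Rabs e) by (subst; apply Rabs_mult).
  assert (H5 : Rabs (F - fx) + Rabs d * Rabs (F' - fpx) <= eta * (Rabs fpxi * Rabs e)).
  { pose proof (Rabs_pos (F - fx)). nra. }
  assert (H6 : Rabs (fpx - fpxi) <= 2 * k * M).
  { replace (fpx - fpxi) with ((fpx - a) + - (fpxi - a)) by ring.
    eapply Rle_trans. apply Rabs_triang. rewrite Rabs_Ropp. lra. }
  assert (H7 : Rabs fpxi <= (1 + k) * M).
  { replace fpxi with ((fpxi - a) + a) by ring.
    eapply Rle_trans. apply Rabs_triang. lra. }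
  assert (H8 : (1 - k) * M <= Rabs fpx).
  { pose proof (Rabs_triang_inv a (a - fpx)) as Hi.
    replace (a - (a - fpx)) with fpx in Hi by ring.
    rewrite (Rabs_minus_sym a fpx) in Hi. lra. }
  pose proof (Rabs_pos e) as Pe. pose proof (Rabs_pos (e + d)) as Ped.
  pose proof (Rabs_pos fpxi). pose proof (Rabs_pos (fpx - fpxi)).
  assert (A1 : Rabs (fpx - fpxi) * Rabs e <= 2 * k * M * Rabs e) by (apply Rmult_le_compat_r; lra).
  assert (A2 : Rabs fpxi * Rabs e <= (1 + k) * M * Rabs e) by (apply Rmult_le_compat_r; lra).
  assert (A3 : eta * (Rabs fpxi * Rabs e) <= eta * ((1 + k) * M * Rabs e)) by (apply Rmult_le_compat_l; lra).
  assert (H9 : Rabs fpx * Rabs (e + d) <= (2 * k * M + eta * ((1 + k) * M)) * Rabs e) by nra.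
  assert (B1 : (1 - k) * M * Rabs (e + d) <= Rabs fpx * Rabs (e + d)) by (apply Rmult_le_compat_r; lra).
  assert (B2 : (2 * k + eta * (1 + k)) * (M * Rabs e) <= zeta * (1 - k) * (M * Rabs e)) by (apply Rmult_le_compat_r; nra).
  assert (H10 : (1 - k) * M * Rabs (e + d) <= (1 - k) * M * (zeta * Rabs e)) by nra.
  apply Rmult_le_reg_l with ((1 - k) * M). nra. exact H10.
Qed.
Lemma abs_bet x d : Rabs x <= d -> - d <= x <= d.
Proof. intros H. pose proof (Rle_abs x). pose proof (Rle_abs (-x)). rewrite Rabs_Ropp in *. lra. Qed.

Lemma interval_nbhd lo hi ps : in_open_interval lo hi ps ->
  exists d, 0 < d /\ forall x, Rabs (x - ps) <= d -> in_open_interval lo hi x.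
Proof.
  intros [Hl Hh].
  destruct lo as [a|]; destruct hi as [b|]; simpl in *.
  - exists (Rmin ((ps - a)/2) ((b - ps)/2)). split.
    + apply Rmin_pos; lra.
    + intros x Hx. pose proof (Rmin_l ((ps - a)/2) ((b - ps)/2)).
      pose proof (Rmin_r ((ps - a)/2) ((b - ps)/2)).
      apply abs_bet in Hx. split; lra.
  - exists ((ps - a)/2). split. lra. intros x Hx. apply abs_bet in Hx. split; lra.
  - exists ((b - ps)/2). split. lra. intros x Hx. apply abs_bet in Hx. split; lra.
  - exists 1. split. lra. intros; split; auto.
Qed.

Lemma cont_nbhd g x0 e : continuity_pt g x0 -> 0 < e ->
  exists d, 0 < d /\ forall x, Rabs (x - x0) <= d -> Rabs (g x - g x0) <= e.
Proof.
  intros Hc He. destruct (Hc e He) as [alp [Ha H]].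
  exists (alp / 2). split. lra. intros x Hx.
  destruct (Req_dec x0 x) as [<-|Hne].
  - unfold Rminus; rewrite Rplus_opp_r, Rabs_R0; lra.
  - left. apply (H x). split. split. exact I. exact Hne. simpl. unfold R_dist. lra.
Qed.

Lemma mvt_sym f f' ps x :
  (forall c, Rabs (c - ps) <= Rabs (x - ps) -> derivable_pt_lim f c (f' c)) ->
  exists xi, Rabs (xi - ps) <= Rabs (x - ps) /\ f x - f ps = f' xi * (x - ps).
Proof.
  intros H. destruct (Rtotal_order x ps) as [Hl|[He|Hg]].
  - destruct (MVT_cor2 f f' x ps Hl) as [c [Hc Hr]].
    + intros c Hc. apply H. rewrite !Rabs_left1 by lra. lra.
    + exists c. split. rewrite !Rabs_left1 by lra. lra. rewrite <- (Ropp_involutive (f x - f ps)).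
      replace (- (f x - f ps)) with (f ps - f x) by ring. rewrite Hc. ring.
  - subst. exists ps. split. lra. ring.
  - destruct (MVT_cor2 f f' ps x Hg) as [c [Hc Hr]].
    + intros c Hc. apply H. rewrite !Rabs_right by lra. lra.
    + exists c. split. rewrite !Rabs_right by lra. lra. exact Hc.
Qed.

Theorem lemma4
  (lo hi : option R) (f f' : R -> R) (pstar eta zeta : R)
  (Hderiv : forall x, in_open_interval lo hi x -> derivable_pt_lim f x (f' x))
  (Hcont : forall x, in_open_interval lo hi x -> continuity_pt f' x)
  (Hpstar : in_open_interval lo hi pstar)
  (Hroot : f pstar = 0) (Hnz : f' pstar <> 0)
  (Heta : 0 < eta < 1) (Hzeta : eta < zeta < 1) :
  exists eps : R, 0 < eps /\
    forall (p F F' : nat -> R),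
      (forall n, F' n <> 0) ->
      (forall n, p (S n) = p n - F n / F' n) ->
      Rabs (p 0%nat - pstar) <= eps ->
      (forall n, in_open_interval lo hi (p n) ->
         2 * Rabs (F n - f (p n)) + Rabs (p (S n) - p n) * Rabs (F' n - f' (p n))
           <= eta * Rabs (F n)) ->
      (forall n, Rabs (p n - pstar) <= eps /\
                 Rabs (p (S n) - pstar) <= zeta * Rabs (p n - pstar)) /\
      Un_cv p pstar.
Proof.
  set (M := Rabs (f' pstar)).
  assert (HM : 0 < M) by (apply Rabs_pos_lt; exact Hnz).
  set (k := (zeta - eta) / (2 + eta + zeta)).
  assert (Hk0 : 0 <= k) by (unfold k; apply Rmult_le_pos; [lra | left; apply Rinv_0_lt_compat; lra]).
  assert (Hkeq : k * (2 + eta + zeta) = zeta - eta) by (unfold k; field; lra).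
  assert (Hk1 : k < 1) by nra.
  assert (Hkz : 2 * k + eta * (1 + k) <= zeta * (1 - k)) by nra.
  destruct (interval_nbhd lo hi pstar Hpstar) as [d1 [Hd1 Hin]].
  assert (HkM : 0 < k * M + 1) by nra.
  destruct (Rle_lt_or_eq_dec 0 k Hk0) as [Hkp|Hk00];
    [|exfalso; unfold k in Hk00;
      assert (0 < (zeta - eta) / (2 + eta + zeta)) by (apply Rdiv_lt_0_compat; lra); lra].
  destruct (cont_nbhd f' pstar (k * M) (Hcont _ Hpstar) ltac:(nra)) as [d2 [Hd2 Hc]].
  set (dl := Rmin d1 d2).
  assert (Hdl : 0 < dl) by (apply Rmin_pos; lra).
  pose proof (Rmin_l d1 d2) as Hl1. pose proof (Rmin_r d1 d2) as Hl2. fold dl in Hl1, Hl2.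
  assert (Step : forall x F F', Rabs (x - pstar) <= dl -> F' <> 0 ->
     2 * Rabs (F - f x) + Rabs (x - F / F' - x) * Rabs (F' - f' x) <= eta * Rabs F ->
     Rabs (x - F / F' - pstar) <= zeta * Rabs (x - pstar)).
  { intros x F F' Hx HF' Hh.
    destruct (mvt_sym f f' pstar x) as [xi [Hxi Hmvt]].
    { intros c Hcx. apply Hderiv, Hin. lra. }
    replace (x - F / F' - pstar) with ((x - pstar) + (- (F / F'))) by ring.
    apply (core M k eta zeta (f' pstar) (f x) (f' x) (f' xi) (x - pstar) (- (F / F')) F F');
      rewrite ?Hroot in Hmvt; try lra; try reflexivity;
      try (field; exact HF'); try (apply Hc; lra);
      try (replace (- (F / F')) with (x - F / F' - x) by ring; exact Hh). }
  exists dl. split. exact Hdl.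
  intros p F F' HF' Hrec H0 Hh.
  assert (All : forall n, Rabs (p n - pstar) <= dl /\
                 Rabs (p (S n) - pstar) <= zeta * Rabs (p n - pstar)).
  { assert (Q : forall n, Rabs (p n - pstar) <= dl).
    { induction n. exact H0.
      rewrite Hrec. eapply Rle_trans. apply Step; auto.
      rewrite <- Hrec. apply Hh, Hin. lra.
      pose proof (Rabs_pos (p n - pstar)). nra. }
    intros n. split. apply Q. rewrite Hrec. apply Step; auto.
    rewrite <- Hrec. apply Hh, Hin. pose proof (Q n). lra. }
  split. exact All.
  assert (Geo : forall n, Rabs (p n - pstar) <= zeta ^ n * dl).
  { induction n. simpl. rewrite Rmult_1_l. apply All.
    simpl. destruct (All n) as [_ Hn].
    eapply Rle_trans. exact Hn. rewrite Rmult_assoc. apply Rmult_le_compat_l; lra. }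
  intros eps Heps.
  destruct (pow_lt_1_zero zeta ltac:(rewrite Rabs_right; lra) (eps / dl))
    as [N HN]. apply Rdiv_lt_0_compat; lra.
  exists N. intros n Hn. unfold R_dist.
  eapply Rle_lt_trans. apply Geo.
  specialize (HN n Hn). rewrite Rabs_right in HN.
  apply Rmult_lt_compat_r with (r := dl) in HN; [|lra].
  unfold Rdiv in HN. rewrite Rmult_assoc, Rinv_l, Rmult_1_r in HN; lra.
  left. apply pow_lt. lra.
Qed.
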